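(* Let $q,q',n$ be integers with $q'\ge 2q>3$ and $n>1$. Let $S$ be an $\mathcal{OS}_q(n)$ of period $m$ with ring sequence $[s_0,\ldots,s_{m-1}]$, and for $x\in\mathbb{Z}_q$ let $x'$ denote the class in $\mathbb{Z}_{q'}$ of the integer in $\{0,\ldots,q-1\}$ representing $x$. Let $T$ be the sequence over $\mathbb{Z}_{q'}$ with ring sequence $[t_0,\ldots,t_{m-1}]$, where $t_i=(-1)^{i+m-1}s_i'$ if $s_i'\neq 0$ and $t_i=(-1)^{i+m-1}q$ (as an element of $\mathbb{Z}_{q'}$) if $s_i'=0$. Then $T$ is an $\mathcal{SOS}_{q'}(n)$.
   Context: For a periodic sequence $S=(s_i)$ over $\mathbb{Z}_q$ write $\mathbf{s}_n(i)=(s_i,\ldots,s_{i+n-1})$; $\mathbf{u}^R$ denotes the reverse of a tuple and $-\mathbf{u}$ its termwise negative. An $n$-window sequence of period $m$ satisfies $\mathbf{s}_n(i)=\mathbf{s}_n(j)\Rightarrow i\equiv j\pmod m$. An $\mathcal{OS}_q(n)$ is an $n$-window sequence with $\mathbf{s}_n(i)\neq\mathbf{s}_n(j)^R$ for all $i,j$; an $\mathcal{SOS}_q(n)$ is an $\mathcal{OS}_q(n)$ with also $\mathbf{s}_n(i)\neq-\mathbf{s}_n(j)^R$ for all $i,j$. The ring sequence of a sequence of period $m$ is one period, i.e. $s_{i+tm}=s_i$. *)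

(* Defs.v *)
From HB Require Import structures.
From mathcomp Require Import all_boot all_algebra.
Set Implicit Arguments. Unset Strict Implicit. Unset Printing Implicit Defensive.
Import GRing.Theory.
Local Open Scope ring_scope.

Definition window (V : Type) (s : nat -> V) (n i : nat) : seq V :=
  [seq s (i + k)%N | k <- iota 0 n].

Definition periodic (V : Type) (s : nat -> V) (m : nat) : Prop :=
  (0 < m)%N /\ forall i, s (i + m)%N = s i.

Definition window_seq (V : eqType) (s : nat -> V) (n m : nat) : Prop :=
  periodic s m /\
  forall i j, window s n i = window s n j -> i = j %[mod m].

Definition OS (V : eqType) (s : nat -> V) (n m : nat) : Prop :=
  window_seq s n m /\ forall i j, window s n i <> rev (window s n j).

Definition SOS (V : zmodType) (s : nat -> V) (n m : nat) : Prop :=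
  OS s n m /\
  forall i j, window s n i <> map (fun x => - x) (rev (window s n j)).

Definition liftZ (q q' : nat) (x : 'Z_q) : 'Z_q' := (val x)%:R.

Definition Tseq (q q' : nat) (s : nat -> 'Z_q) (m : nat) (i : nat) : 'Z_q' :=
  let j := (i %% m)%N in
  let x := liftZ q' (s j) in
  (-1) ^+ (j + m - 1)%N * (if x != 0 then x else q%:R).

(* Main.v *)
Require Import Defs.
From mathcomp Require Import all_boot all_algebra.
From mathcomp Require Import zify.
Import GRing.Theory.

Definition psi (q q' : nat) (v : 'Z_q') : 'Z_q :=
  (((if (nat_of_ord v <= q) then nat_of_ord v else q' - nat_of_ord v)%N)%:R)%R.

Lemma opp_val (p : nat) (v : 'I_p.+2) : nat_of_ord (- v)%R = ((p.+2 - nat_of_ord v) %% p.+2)%N.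
Proof. by []. Qed.

Lemma key (q q' : nat) (x : 'Z_q) :
  (2 * q <= q')%N -> (1 < q)%N ->
  let w : 'Z_q' := (if liftZ q' x != 0 then liftZ q' x else q%:R)%R in
  @psi q q' w = x /\ @psi q q' (- w)%R = x.
Proof.
move=> h1 h2 /=.
have hq' : (1 < q')%N by lia.
have Hc := Zp_cast hq'.
have Hx : (nat_of_ord x < q)%N by rewrite -[q in (_ < q)%N](Zp_cast h2) ltn_ord.
have Ev : \val x = nat_of_ord x by [].
pose c := if nat_of_ord x != 0%N then nat_of_ord x else q.
have Hw : ((if liftZ q' x != 0 then liftZ q' x else q%:R)%R = (c%:R : 'Z_q')%R).
  rewrite /c; case: (eqVneq (nat_of_ord x) 0%N) => H0.
  - have -> : liftZ q' x = 0%R.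
      apply: val_inj; rewrite /liftZ; apply: (etrans (val_Zp_nat hq' _)); by rewrite Ev H0 mod0n.
    by rewrite eqxx ?H0.
  - have Hn : liftZ q' x != 0%R.
      have Hv : nat_of_ord (liftZ q' x) = nat_of_ord x.
        apply: (etrans (val_Zp_nat hq' _)); rewrite modn_small //; lia.
      apply/eqP => E; move: Hv; rewrite E => h; move/eqP: H0; apply; rewrite -h; by [].
    by rewrite Hn.
have Hc1 : (0 < c <= q)%N by rewrite /c; case: eqP => /= ?; lia.
have Hxc : ((c%:R : 'Z_q) = x)%R.
  rewrite /c; case: eqP => [H0|H0]; last by rewrite natr_Zp.
  by rewrite pchar_Zp //; apply/val_inj; rewrite /= H0.
have Hvc : nat_of_ord (c%:R : 'Z_q')%R = c by rewrite val_Zp_nat // modn_small //; lia.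
rewrite Hw; split.
- by rewrite /psi Hvc; have -> : (c <= q)%N by lia.
- rewrite /psi.
  have -> : nat_of_ord (- (c%:R : 'Z_q'))%R = (q' - c)%N.
    move: (c%:R : 'Z_q')%R Hvc.
    move=> v hv; have E : nat_of_ord (- v)%R = (((Zp_trunc q').+2 - v) %% (Zp_trunc q').+2)%N := erefl.
    rewrite E hv Hc modn_small //; lia.
  case: leqP => Hle.
  + have Hcq : c = q by lia.
    have -> : (q' - c = q)%N by lia.
    by rewrite -Hxc Hcq.
  + by have -> : (q' - (q' - c) = c)%N by lia.
Qed.

Lemma per_mod (V : Type) (s : nat -> V) (m : nat) :
  periodic s m -> forall i, s i = s (i %% m)%N.
Proof.
move=> [_ Hp] i; rewrite {1}(divn_eq i m).
elim: (i %/ m)%N => [|k IH]; first by rewrite mul0n add0n.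
by rewrite mulSn -addnA addnC Hp.
Qed.

Lemma psiT (q q' m : nat) (s : nat -> 'Z_q) :
  (2 * q <= q')%N -> (1 < q)%N -> periodic s m -> forall i,
  @psi q q' (Tseq q' s m i) = s i /\ @psi q q' (- Tseq q' s m i)%R = s i.
Proof.
move=> h1 h2 hp i; rewrite (@per_mod _ s m hp i) /Tseq.
have [K1 K2] := @key q q' (s (i %% m)%N) h1 h2.
rewrite -signr_odd; case: (odd _); rewrite ?expr1 ?expr0 ?mulN1r ?mul1r ?opprK; by split.
Qed.

Lemma map_window (q q' m : nat) (s : nat -> 'Z_q) n i :
  (2 * q <= q')%N -> (1 < q)%N -> periodic s m ->
  map (@psi q q') (window (Tseq q' s m) n i) = window s n i /\
  map (@psi q q') (map (fun x => - x)%R (window (Tseq q' s m) n i)) = window s n i.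
Proof.
move=> h1 h2 hp; rewrite /window -!map_comp; split; apply: eq_map => k /=;
  by have [] := @psiT q q' m s h1 h2 hp (i + k)%N.
Qed.

Theorem lemma3p12 (q q' n m : nat) (s : nat -> 'Z_q) :
  (2 * q <= q')%N -> (3 < 2 * q)%N -> (1 < n)%N ->
  OS s n m ->
  SOS (Tseq q' s m) n m.
Proof.
move=> h1 h2 _ [[hp hw] hr].
have hq : (1 < q)%N by lia.
have MW i := @map_window q q' m s n i h1 hq hp.
split; [split; [split|] |].
- split; first by case: hp.
  by move=> i; rewrite /Tseq modnDr.
- move=> i j E; apply: hw.
  by rewrite -(MW i).1 -(MW j).1 E.
- move=> i j E; apply: (hr i j).
  by rewrite -(MW i).1 -(MW j).1 E map_rev.
- move=> i j E; apply: (hr i j).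
  by rewrite -(MW i).1 -(MW j).2 E !map_rev.
Qed.
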